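(* Let $\alpha\in[0,1)$, $\sigma=\frac{1+\alpha}{2}$ (so $\rho:=\frac{1-\alpha}{1-\sigma}=2$), $\mu=\frac{8}{\sqrt{1-\alpha}}$, and let $\omega:\mathbb{R}_+\to(0,\infty)$ be non-decreasing. Let $(\lambda_k),(x_k),(y_k)$ be generated by the acceleration framework (context) up to $K$ for convex differentiable $g$ with minimizer $x^*$, with $\delta\le\frac{\|x^*\|}{\mu A_K}$ and $\lambda_k\ge\frac{1}{\rho\,\omega(\|y_k-\tilde x_{k-1}\|)}$ for all $k\in[K]$. Then for all $k\in[K]$ and all integers $J$ with $0<J<k/2$, \[ A_k\ge\min\left\{\frac{4^J}{\rho\,\omega(\mu\|x^*\|/4)},\ \frac{(k/J)^2}{16\rho\,\omega\!\left(\frac{4\mu\|x^*\|}{(k/J)^{3/2}}\right)}\right\}. \] Further, if $\|x^*\|\le R$ then $A_k\ge\frac{1}{2\omega(2\mu R)}$ for all $k\in[K]$.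
   Context: Acceleration framework: let $g:\mathbb{R}^d\to\mathbb{R}$ be convex and differentiable, $\sigma\in(0,1)$, $\delta\ge0$, $K\ge1$. Sequences $(\lambda_k)_{k=1}^K\subset(0,\infty)$ and $(x_k)_{k=0}^K,(y_k)_{k=0}^K\subset\mathbb{R}^d$ are generated by the framework if $x_0=y_0=0$, $A_0=0$, and for each $k=0,\dots,K-1$, with $a_{k+1}=\frac12\big[\lambda_{k+1}+\sqrt{\lambda_{k+1}^2+4\lambda_{k+1}A_k}\big]$, $A_{k+1}=A_k+a_{k+1}$, $\tilde x_k=\frac{A_k}{A_{k+1}}y_k+\frac{a_{k+1}}{A_{k+1}}x_k$, one has $\|\lambda_{k+1}\nabla g(y_{k+1})+y_{k+1}-\tilde x_k\|\le\sigma\|y_{k+1}-\tilde x_k\|+\lambda_{k+1}\delta$ and $\|x_{k+1}-(x_k-a_{k+1}\nabla g(y_{k+1}))\|\le a_{k+1}\delta$. (Note $\lambda_{k+1}A_{k+1}=a_{k+1}^2$.) *)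

(* Defs.v *)
From Stdlib Require Vectors.Fin.
From Stdlib Require Import Reals Lra.
Open Scope R_scope.

Definition vec (d : nat) : Type := Fin.t d -> R.

Fixpoint fsum (d : nat) : (Fin.t d -> R) -> R :=
  match d return (Fin.t d -> R) -> R with
  | O => fun _ => 0
  | S n => fun f => f Fin.F1 + fsum n (fun i => f (Fin.FS i))
  end.

Definition vzero {d} : vec d := fun _ => 0.
Definition vadd {d} (u v : vec d) : vec d := fun i => u i + v i.
Definition vsub {d} (u v : vec d) : vec d := fun i => u i - v i.
Definition vscal {d} (c : R) (v : vec d) : vec d := fun i => c * v i.
Definition inner {d} (u v : vec d) : R := fsum d (fun i => u i * v i).
Definition vnorm {d} (v : vec d) : R := sqrt (inner v v).

Definition convex_fun {d} (g : vec d -> R) : Prop :=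
  forall (x y : vec d) (t : R), 0 <= t <= 1 ->
    g (vadd (vscal t x) (vscal (1 - t) y)) <= t * g x + (1 - t) * g y.

Definition has_gradient {d} (g : vec d -> R) (G : vec d -> vec d) : Prop :=
  forall x : vec d, forall eps, 0 < eps -> exists delta, 0 < delta /\
    forall h : vec d, vnorm h < delta ->
      Rabs (g (vadd x h) - g x - inner (G x) h) <= eps * vnorm h.

Definition is_minimizer {d} (g : vec d -> R) (xs : vec d) : Prop :=
  forall x, g xs <= g x.

(* a_{k+1} given lambda_{k+1} and A_k *)
Definition a_next (l Ak : R) : R := (l + sqrt (l ^ 2 + 4 * l * Ak)) / 2.

(* A_k from the stepsizes lam (lam k = lambda_k, lam 0 unused) *)
Fixpoint Aseq (lam : nat -> R) (k : nat) : R :=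
  match k with
  | O => 0
  | S n => Aseq lam n + a_next (lam (S n)) (Aseq lam n)
  end.

Definition aseq (lam : nat -> R) (k : nat) : R := a_next (lam (S k)) (Aseq lam k).

Definition xtilde {d} (lam : nat -> R) (x y : nat -> vec d) (k : nat) : vec d :=
  vadd (vscal (Aseq lam k / Aseq lam (S k)) (y k))
       (vscal (aseq lam k / Aseq lam (S k)) (x k)).

Definition accel_framework {d} (g : vec d -> R) (G : vec d -> vec d)
    (sigma delta : R) (K : nat) (lam : nat -> R) (x y : nat -> vec d) : Prop :=
  (forall k, (1 <= k <= K)%nat -> 0 < lam k) /\
  x O = vzero /\ y O = vzero /\
  forall k, (k < K)%nat ->
    vnorm (vsub (vadd (vscal (lam (S k)) (G (y (S k)))) (y (S k))) (xtilde lam x y k))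
      <= sigma * vnorm (vsub (y (S k)) (xtilde lam x y k)) + lam (S k) * delta /\
    vnorm (vsub (x (S k)) (vsub (x k) (vscal (aseq lam k) (G (y (S k))))))
      <= aseq lam k * delta.

(* Main.v *)
Require Import Defs.
From Stdlib Require Import Reals Lra Psatz Lia FunctionalExtensionality.
Open Scope R_scope.

Lemma fsum_lin3 d (F f1 f2 f3 : Fin.t d -> R) a b c :
  (forall i, F i = a * f1 i + b * f2 i + c * f3 i) ->
  fsum d F = a * fsum d f1 + b * fsum d f2 + c * fsum d f3.
Proof.
  revert F f1 f2 f3; induction d as [|d IH]; intros F f1 f2 f3 H; simpl.
  - ring.
  - rewrite (IH (fun i => F (Fin.FS i)) (fun i => f1 (Fin.FS i))
                (fun i => f2 (Fin.FS i)) (fun i => f3 (Fin.FS i))).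
    + rewrite H; ring.
    + intro i; apply H.
Qed.

Lemma fsum_nonneg d (f : Fin.t d -> R) : (forall i, 0 <= f i) -> 0 <= fsum d f.
Proof.
  revert f; induction d as [|d IH]; intros f H; simpl. lra.
  pose proof (H Fin.F1). pose proof (IH (fun i => f (Fin.FS i)) (fun i => H _)). lra.
Qed.

Lemma inner_nonneg d (v : vec d) : 0 <= inner v v.
Proof. unfold inner; apply fsum_nonneg; intro; nra. Qed.

Lemma vnorm_nonneg d (v : vec d) : 0 <= vnorm v.
Proof. apply sqrt_pos. Qed.

Lemma vnorm_sq d (v : vec d) : vnorm v * vnorm v = inner v v.
Proof. unfold vnorm; apply sqrt_sqrt, inner_nonneg. Qed.

Lemma inner_sym d (u v : vec d) : inner u v = inner v u.
Proof.
  unfold inner. rewrite (fsum_lin3 d (fun i => u i * v i) (fun i => v i * u i)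
     (fun _ => 0) (fun _ => 0) 1 0 0). ring. intro; ring.
Qed.

Lemma inner_quad d (u v : vec d) t :
  0 <= t * t * inner u u - 2 * t * inner u v + inner v v.
Proof.
  set (w := fun i => t * u i - v i).
  assert (H := inner_nonneg d w).
  unfold inner in *.
  rewrite (fsum_lin3 d (fun i => w i * w i) (fun i => u i * u i)
     (fun i => u i * v i) (fun i => v i * v i) (t*t) (-2*t) 1) in H.
  lra. intro; unfold w; ring.
Qed.

Lemma cs_zero d (u v : vec d) : vnorm u = 0 -> inner u v <= 0.
Proof.
  intro Ha. pose proof (vnorm_sq d u) as Hu. pose proof (vnorm_sq d v) as Hv.
  destruct (Rle_dec (inner u v) 0) as [Hn|Hn]. lra.
  exfalso. set (b := vnorm v) in *.
  pose proof (inner_quad d u v ((b*b + 1) / inner u v)) as Q.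
  rewrite <- Hu, <- Hv, Ha in Q.
  assert (inner u v > 0) by lra.
  set (t := (b*b+1)/inner u v) in *.
  assert (E: t * inner u v = b*b+1) by (unfold t; field; lra).
  nra.
Qed.

Lemma cauchy_schwarz d (u v : vec d) : inner u v <= vnorm u * vnorm v.
Proof.
  pose proof (vnorm_nonneg d u). pose proof (vnorm_nonneg d v).
  destruct (Req_dec (vnorm u) 0) as [Ha|Ha].
  { rewrite Ha. pose proof (cs_zero d u v Ha). lra. }
  destruct (Req_dec (vnorm v) 0) as [Hb|Hb].
  { rewrite Hb, inner_sym. pose proof (cs_zero d v u Hb). lra. }
  pose proof (vnorm_sq d u) as Hu. pose proof (vnorm_sq d v) as Hv.
  set (a := vnorm u) in *. set (b := vnorm v) in *.
  assert (a > 0) by lra. assert (b > 0) by lra.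
  pose proof (inner_quad d u v (b / a)) as Q.
  rewrite <- Hu, <- Hv in Q.
  set (t := b / a) in *.
  assert (E: t * a = b) by (unfold t; field; lra).
  assert (t > 0) by (unfold t; apply Rdiv_lt_0_compat; lra).
  assert (t * inner u v <= t * (a * b)) by nra.
  nra.
Qed.

Lemma vnorm_scal d t (h : vec d) : 0 <= t -> vnorm (vscal t h) = t * vnorm h.
Proof.
  intro Ht. unfold vnorm.
  assert (E: inner (vscal t h) (vscal t h) = (t*t) * inner h h).
  { unfold inner.
    rewrite (fsum_lin3 d (fun i => vscal t h i * vscal t h i) (fun i => h i * h i)
     (fun _ => 0) (fun _ => 0) (t*t) 0 0). ring.
    intro; unfold vscal; ring. }
  rewrite E, sqrt_mult; [|nra|apply inner_nonneg]. rewrite sqrt_square; auto.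
Qed.

Lemma inner_scal_r d (u h : vec d) t : inner u (vscal t h) = t * inner u h.
Proof.
  unfold inner. rewrite (fsum_lin3 d _ (fun i => u i * h i) (fun _ => 0) (fun _ => 0) t 0 0).
  ring. intro; unfold vscal; ring.
Qed.

Lemma grad_ineq d (g : vec d -> R) G : convex_fun g -> has_gradient g G ->
  forall y z, g y + inner (G y) (vsub z y) <= g z.
Proof.
  intros Hc Hg y z.
  set (h := vsub z y). set (I := inner (G y) h). set (N := vnorm h).
  destruct (Rle_dec (g y + I) (g z)) as [ok|nok]; [exact ok|exfalso].
  set (gap := g y + I - g z).
  assert (Hgap : gap > 0) by (unfold gap; lra).
  assert (HN : 0 <= N) by apply vnorm_nonneg.
  destruct (Hg y (gap / (2 * (N + 1)))) as [dl [Hdl Hd]].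
  { apply Rdiv_lt_0_compat; lra. }
  set (t := Rmin 1 (dl / (2 * (N + 1)))).
  assert (Ht0 : 0 < t).
  { unfold t; apply Rmin_glb_lt; [lra|apply Rdiv_lt_0_compat; lra]. }
  assert (Ht1 : t <= 1) by apply Rmin_l.
  assert (Ht2 : t <= dl / (2 * (N + 1))) by apply Rmin_r.
  assert (HtN : t * N < dl).
  { assert (t * (2 * (N+1)) <= dl).
    { apply (Rmult_le_compat_r (2*(N+1))) in Ht2; [|lra].
      replace (dl / (2 * (N + 1)) * (2 * (N + 1))) with dl in Ht2 by (field; lra). lra. }
    nra. }
  specialize (Hd (vscal t h)). rewrite vnorm_scal in Hd by lra.
  specialize (Hd HtN). rewrite inner_scal_r in Hd. fold I N in Hd.
  assert (Hconv := Hc z y t (conj (Rlt_le _ _ Ht0) Ht1)).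
  assert (E : vadd (vscal t z) (vscal (1 - t) y) = vadd y (vscal t h)).
  { apply functional_extensionality; intro i; unfold vadd, vscal, h, vsub; ring. }
  rewrite E in Hconv.
  assert (Hd2 := Rle_abs (-(g (vadd y (vscal t h)) - g y - t * I))). rewrite Rabs_Ropp in Hd2.
  set (e := gap / (2 * (N + 1))) in *.
  assert (He : e * (2 * (N+1)) = gap) by (unfold e; field; lra).
  assert (t * I - e * (t * N) <= t * (g z - g y)) by lra.
  assert (I - e * N <= g z - g y).
  { apply (Rmult_le_reg_l t); [lra|]. nra. }
  assert (e * N < gap) by nra.
  unfold gap in *. lra.
Qed.

Lemma fsum_lin5 d (F f1 f2 f3 f4 f5 : Fin.t d -> R) a b c e h :
  (forall i, F i = a * f1 i + b * f2 i + c * f3 i + e * f4 i + h * f5 i) ->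
  fsum d F = a * fsum d f1 + b * fsum d f2 + c * fsum d f3 + e * fsum d f4 + h * fsum d f5.
Proof.
  revert F f1 f2 f3 f4 f5; induction d as [|d IH]; intros F f1 f2 f3 f4 f5 H; simpl.
  - ring.
  - rewrite (IH (fun i => F (Fin.FS i)) (fun i => f1 (Fin.FS i))
                (fun i => f2 (Fin.FS i)) (fun i => f3 (Fin.FS i))
                (fun i => f4 (Fin.FS i)) (fun i => f5 (Fin.FS i))).
    + rewrite H; ring.
    + intro i; apply H.
Qed.

Lemma a_next_pos l A : 0 < l -> 0 <= A -> 0 < a_next l A.
Proof.
  intros. unfold a_next. pose proof (sqrt_pos (l ^ 2 + 4 * l * A)). lra.
Qed.

Lemma a_next_sq l A : 0 < l -> 0 <= A -> a_next l A * a_next l A = l * (A + a_next l A).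
Proof.
  intros. unfold a_next.
  pose proof (sqrt_sqrt (l ^ 2 + 4 * l * A)) as E.
  assert (0 <= l ^ 2 + 4 * l * A) by nra.
  specialize (E H1). set (s := sqrt _) in *. nra.
Qed.

Lemma one_step d (g : vec d -> R) G xs sigma delta lam (x y : nat -> vec d) k
  (Hc : convex_fun g) (Hg : has_gradient g G)
  (Hs : 0 <= sigma < 1) (Hd : 0 <= delta)
  (Hl : 0 < lam (S k)) (HA : 0 <= Aseq lam k)
  (He : vnorm (vsub (vadd (vscal (lam (S k)) (G (y (S k)))) (y (S k))) (xtilde lam x y k))
      <= sigma * vnorm (vsub (y (S k)) (xtilde lam x y k)) + lam (S k) * delta)
  (Hf : vnorm (vsub (x (S k)) (vsub (x k) (vscal (aseq lam k) (G (y (S k))))))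
      <= aseq lam k * delta) :
  let c := 1 - sigma ^ 2 in
  2 * (Aseq lam (S k) * (g (y (S k)) - g xs)) + vnorm (vsub (x (S k)) xs) ^ 2
  <= 2 * (Aseq lam k * (g (y k) - g xs)) + vnorm (vsub (x k) xs) ^ 2
     - c / 2 * (Aseq lam (S k) / lam (S k)) * vnorm (vsub (y (S k)) (xtilde lam x y k)) ^ 2
     + (1 + 2 * sigma ^ 2 / c) * aseq lam k ^ 2 * delta ^ 2
     + 2 * aseq lam k * delta * vnorm (vsub (x (S k)) xs).
Proof.
  intro c.
  set (l := lam (S k)) in *. set (A := Aseq lam k) in *. set (a := aseq lam k) in *.
  assert (HA' : Aseq lam (S k) = A + a) by reflexivity.
  rewrite HA'.
  assert (Ha : 0 < a) by (apply a_next_pos; auto).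
  assert (Ha2 : a * a = l * (A + a)) by (apply a_next_sq; auto).
  set (v := G (y (S k))) in *. set (y' := y (S k)) in *.
  set (xt := xtilde lam x y k) in *.
  set (w := vsub y' xt) in *.
  set (e := vsub (vadd (vscal l v) y') xt) in *.
  set (f := vsub (x (S k)) (vsub (x k) (vscal a v))) in *.
  set (Q := vsub (x (S k)) xs).
  set (Xv := vsub (x k) xs).
  assert (Hxt : forall i, xt i = A / (A + a) * y k i + a / (A + a) * x k i).
  { intro i. unfold xt, xtilde, vadd, vscal. reflexivity. }
  assert (I1 : inner e e = l*l*inner v v + 2*l*inner v w + inner w w).
  { unfold inner. rewrite (fsum_lin5 d (fun i => e i * e i) (fun i => v i * v i)
      (fun i => v i * w i) (fun i => w i * w i) (fun _ => 0) (fun _ => 0) (l*l) (2*l) 1 0 0).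
    ring. intro i. unfold e, w, vsub, vadd, vscal. ring. }
  assert (I2 : inner Q Q = inner Xv Xv - 2 * a * inner v Xv + a * a * inner v v
                 + 2 * inner Q f - inner f f).
  { unfold inner. rewrite (fsum_lin5 d (fun i => Q i * Q i) (fun i => Xv i * Xv i)
      (fun i => v i * Xv i) (fun i => v i * v i) (fun i => Q i * f i) (fun i => f i * f i)
      1 (-2*a) (a*a) 2 (-1)).
    ring. intro i. unfold Q, Xv, f, vsub, vscal. ring. }
  assert (I3 : a * inner v (vsub xs y') + A * inner v (vsub (y k) y')
               = - ((A + a) * inner v w + a * inner v Xv)).
  { unfold inner.
    rewrite (fsum_lin5 d (fun i => v i * vsub xs y' i) (fun i => v i * w i)
      (fun i => v i * Xv i) (fun i => v i * vsub (y k) y' i) (fun _ => 0) (fun _ => 0)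
      (- (A+a) / a) (-1) (-A/a) 0 0).
    field. lra. intro i. unfold w, Xv, vsub. rewrite Hxt. field. lra. }
  assert (C1 := grad_ineq d g G Hc Hg y' (y k)). fold v in C1.
  assert (C2 := grad_ineq d g G Hc Hg y' xs). fold v in C2.
  assert (CS := cauchy_schwarz d Q f).
  assert (Hff := inner_nonneg d f).
  assert (HQ := vnorm_nonneg d Q). assert (Hfn := vnorm_nonneg d f).
  assert (Hen := vnorm_nonneg d e). assert (Hwn := vnorm_nonneg d w).
  assert (EQ := vnorm_sq d Q). assert (EX := vnorm_sq d Xv).
  assert (EE := vnorm_sq d e). assert (EW := vnorm_sq d w).
  fold Q Xv.
  set (Wv := inner v w) in *. set (Dx := inner v Xv) in *. set (V := inner v v) in *.
  set (r := vnorm w) in *.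
  assert (S1 : 2 * ((A + a) * (g y' - g xs)) - 2 * (A * (g (y k) - g xs))
               <= 2 * ((A + a) * Wv + a * Dx)).
  { assert (A * (g y' - g (y k)) <= - A * inner v (vsub (y k) y')) by nra.
    assert (a * (g y' - g xs) <= - a * inner v (vsub xs y')) by nra.
    nra. }
  assert (S2 : vnorm Q ^ 2 <= vnorm Xv ^ 2 - 2 * a * Dx + a * a * V + 2 * a * delta * vnorm Q).
  { assert (inner Q f <= vnorm Q * (a * delta)).
    { assert (vnorm Q * vnorm f <= vnorm Q * (a * delta)) by (apply Rmult_le_compat_l; lra).
      lra. }
    nra. }
  set (K1 := (A + a) / l).
  assert (HK1 : K1 * l = A + a) by (unfold K1; field; lra).
  assert (HK1p : 0 <= K1) by (unfold K1; apply Rmult_le_pos; [lra|apply Rlt_le, Rinv_0_lt_compat; lra]).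
  assert (S3 : 2 * (A + a) * Wv + a * a * V = K1 * (inner e e - r ^ 2)).
  { rewrite I1, <- EW, Ha2, <- HK1. ring. }
  assert (Hc0 : 0 < c) by (unfold c; nra).
  assert (S4 : inner e e - r ^ 2 <= - (c / 2) * r ^ 2 + (1 + 2 * sigma ^ 2 / c) * (l * l) * delta ^ 2).
  { assert (vnorm e ^ 2 <= (sigma * r + l * delta) ^ 2).
    { apply pow_incr; lra. }
    assert (2 * sigma * r * l * delta <= c / 2 * r ^ 2 + 2 * sigma ^ 2 / c * (l * l) * delta ^ 2).
    { assert (Hx : c * (2 * sigma * r * l * delta) <= c * (c / 2 * r ^ 2 + 2 * sigma ^ 2 / c * (l * l) * delta ^ 2)).
      { replace (c * (c / 2 * r ^ 2 + 2 * sigma ^ 2 / c * (l * l) * delta ^ 2))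
          with (c * c / 2 * r ^ 2 + 2 * sigma ^ 2 * (l * l) * delta ^ 2) by (field; lra).
        assert (0 <= (c * r - 2 * sigma * l * delta) ^ 2) by apply pow2_ge_0.
        nra. }
      apply Rmult_le_reg_l in Hx; lra. }
    unfold c in *. nra. }
  assert (S5 : K1 * (inner e e - r ^ 2) <= - (c / 2) * K1 * r ^ 2 + (1 + 2 * sigma ^ 2 / c) * (a * a) * delta ^ 2).
  { rewrite Ha2, <- HK1.
    replace (- (c / 2) * K1 * r ^ 2 + (1 + 2 * sigma ^ 2 / c) * (l * (K1 * l)) * delta ^ 2)
      with (K1 * (- (c / 2) * r ^ 2 + (1 + 2 * sigma ^ 2 / c) * (l * l) * delta ^ 2)) by ring.
    apply Rmult_le_compat_l; lra. }
  unfold K1 in *.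
  replace (a ^ 2) with (a * a) by ring.
  nra.
Qed.

Fixpoint ssum (f : nat -> R) (n : nat) : R :=
  match n with O => 0 | S m => ssum f m + f (S m) end.

Lemma ssum_le (f h : nat -> R) n : (forall i, (1 <= i <= n)%nat -> f i <= h i) ->
  ssum f n <= ssum h n.
Proof.
  induction n as [|n IH]; intro H; simpl. lra.
  assert (ssum f n <= ssum h n) by (apply IH; intros; apply H; lia).
  assert (f (S n) <= h (S n)) by (apply H; lia). lra.
Qed.

Lemma ssum_nonneg (f : nat -> R) n : (forall i, (1 <= i <= n)%nat -> 0 <= f i) -> 0 <= ssum f n.
Proof.
  induction n as [|n IH]; intro H; simpl. lra.
  assert (0 <= ssum f n) by (apply IH; intros; apply H; lia).
  assert (0 <= f (S n)) by (apply H; lia). lra.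
Qed.

Lemma ssum_scal (f : nat -> R) c n : ssum (fun i => c * f i) n = c * ssum f n.
Proof. induction n; simpl; [ring|rewrite IHn; ring]. Qed.

Lemma ssum_plus (f h : nat -> R) n : ssum (fun i => f i + h i) n = ssum f n + ssum h n.
Proof. induction n; simpl; [ring|rewrite IHn; ring]. Qed.

Lemma ssum_mono (f : nat -> R) m n : (forall i, 0 <= f i) -> (m <= n)%nat -> ssum f m <= ssum f n.
Proof.
  intros H Hmn. induction Hmn. lra. simpl. specialize (H (S m0)). lra.
Qed.

Lemma ssum_mono' (f : nat -> R) m n : (forall i, (1 <= i <= n)%nat -> 0 <= f i) -> (m <= n)%nat -> ssum f m <= ssum f n.
Proof.
  intros H Hmn. induction Hmn. lra. simpl.
  assert (ssum f m <= ssum f m0) by (apply IHHmn; intros; apply H; lia).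
  specialize (H (S m0) ltac:(lia)). lra.
Qed.

Lemma ssum_single (f : nat -> R) n i : (forall j, 0 <= f j) -> (1 <= i <= n)%nat -> f i <= ssum f n.
Proof.
  intros H Hi. induction n as [|n IH]. lia.
  simpl. destruct (Nat.eq_dec i (S n)) as [->|ne].
  - pose proof (ssum_nonneg f n (fun j _ => H j)). lra.
  - assert (f i <= ssum f n) by (apply IH; lia). specialize (H (S n)). lra.
Qed.

Lemma Aseq_nonneg lam K : (forall k, (1 <= k <= K)%nat -> 0 < lam k) ->
  forall n, (n <= K)%nat -> 0 <= Aseq lam n.
Proof.
  intros Hl n. induction n as [|n IH]; intro Hn; simpl. lra.
  assert (0 <= Aseq lam n) by (apply IH; lia).
  pose proof (a_next_pos (lam (S n)) (Aseq lam n) (Hl (S n) ltac:(lia)) H). lra.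
Qed.

Lemma aseq_pos lam K : (forall k, (1 <= k <= K)%nat -> 0 < lam k) ->
  forall n, (n < K)%nat -> 0 < aseq lam n.
Proof.
  intros Hl n Hn. unfold aseq. apply a_next_pos. apply Hl; lia.
  apply (Aseq_nonneg lam K Hl); lia.
Qed.

Lemma Aseq_pos lam K : (forall k, (1 <= k <= K)%nat -> 0 < lam k) ->
  forall n, (1 <= n <= K)%nat -> 0 < Aseq lam n.
Proof.
  intros Hl n Hn. destruct n as [|n]. lia.
  change (Aseq lam (S n)) with (Aseq lam n + aseq lam n).
  pose proof (Aseq_nonneg lam K Hl n ltac:(lia)). pose proof (aseq_pos lam K Hl n ltac:(lia)). lra.
Qed.

Lemma Aseq_mono lam K : (forall k, (1 <= k <= K)%nat -> 0 < lam k) ->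
  forall m n, (m <= n <= K)%nat -> Aseq lam m <= Aseq lam n.
Proof.
  intros Hl m n [Hmn HnK]. induction Hmn. lra.
  change (Aseq lam (S m0)) with (Aseq lam m0 + aseq lam m0).
  pose proof (aseq_pos lam K Hl m0 ltac:(lia)). assert (Aseq lam m <= Aseq lam m0) by (apply IHHmn; lia). lra.
Qed.

Lemma ssum_aa lam n : ssum (fun i => aseq lam (i - 1)) n = Aseq lam n.
Proof.
  induction n as [|n IH]; simpl. reflexivity. rewrite IH. replace (n - 0)%nat with n by lia. reflexivity.
Qed.

Lemma ssum_aa2 lam K : (forall k, (1 <= k <= K)%nat -> 0 < lam k) ->
  forall n, (n <= K)%nat -> ssum (fun i => aseq lam (i - 1) ^ 2) n <= Aseq lam n ^ 2.
Proof.
  intros Hl n. induction n as [|n IH]; intro Hn; cbn [ssum Aseq]. simpl; lra.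
  replace (S n - 1)%nat with n by lia.
  assert (ssum (fun i => aseq lam (i - 1) ^ 2) n <= Aseq lam n ^ 2) by (apply IH; lia).
  pose proof (Aseq_nonneg lam K Hl n ltac:(lia)). pose proof (aseq_pos lam K Hl n ltac:(lia)).
  change (a_next (lam (S n)) (Aseq lam n)) with (aseq lam n). nra.
Qed.

Lemma dbound (D aa : nat -> R) n X B dl :
  (forall i, (i <= n)%nat -> 0 <= aa i) -> (forall i, 0 <= D i) -> 0 <= X -> 0 <= dl ->
  dl * ssum aa n <= X / 8 -> B <= (1 + 7/120) * X ^ 2 ->
  (forall m, (m <= n)%nat -> D m ^ 2 <= B + 2 * dl * ssum (fun i => aa i * D i) m) ->
  forall m, (m <= n)%nat -> forall i, (i <= m)%nat -> D i <= 6/5 * X.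
Proof.
  intros Ha HD HX Hdl Hq HB H m. induction m as [|m IH]; intros Hm i Hi.
  - assert (i = 0%nat) by lia. subst. specialize (H 0%nat Hm). simpl in H.
    specialize (HD 0%nat). nra.
  - destruct (Nat.eq_dec i (S m)) as [->|ne]; [|apply IH; lia].
    destruct (Rle_dec (D (S m)) (6/5*X)) as [ok|nok]; [exact ok|exfalso].
    assert (Hs : ssum (fun i => aa i * D i) (S m) <= ssum (fun i => D (S m) * aa i) (S m)).
    { apply ssum_le. intros j Hj. destruct (Nat.eq_dec j (S m)) as [->|nj]. right; ring.
      assert (D j <= 6/5*X) by (apply IH; lia). specialize (Ha j ltac:(lia)). nra. }
    rewrite ssum_scal in Hs.
    assert (dl * ssum aa (S m) <= X / 8).
    { pose proof (ssum_mono' aa (S m) n (fun i Hi => Ha i ltac:(lia)) Hm). nra. }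
    specialize (H (S m) Hm). specialize (HD (S m)).
    assert (dl * ssum (fun i => aa i * D i) (S m) <= D (S m) * (X / 8)) by nra.
    nra.
Qed.

Lemma vnorm_zero_sub d (xs : vec d) : vnorm (vsub vzero xs) = vnorm xs.
Proof.
  unfold vnorm. f_equal. unfold inner.
  rewrite (fsum_lin5 d (fun i => vsub vzero xs i * vsub vzero xs i) (fun i => xs i * xs i)
    (fun _ => 0) (fun _ => 0) (fun _ => 0) (fun _ => 0) 1 0 0 0 0). ring.
  intro; unfold vsub, vzero; ring.
Qed.

Lemma main_sum d alpha (g : vec d -> R) G xs delta K lam x y :
  0 <= alpha < 1 -> convex_fun g -> has_gradient g G -> is_minimizer g xs ->
  (1 <= K)%nat -> 0 <= delta ->
  accel_framework g G ((1 + alpha) / 2) delta K lam x y ->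
  delta <= vnorm xs / ((8 / sqrt (1 - alpha)) * Aseq lam K) ->
  ssum (fun i => Aseq lam i / lam i * vnorm (vsub (y i) (xtilde lam x y (i - 1))) ^ 2) K
    <= 4 * vnorm xs ^ 2 / (1 - alpha).
Proof.
  intros Ha Hc Hg Hmin HK Hd [Hl [Hx0 [Hy0 Hstep]]] Hdelta.
  set (sigma := (1 + alpha) / 2) in *.
  set (c := 1 - sigma ^ 2).
  set (C1 := 1 + 2 * sigma ^ 2 / c).
  set (X := vnorm xs).
  set (D := fun i => vnorm (vsub (x i) xs)).
  set (T := fun i => Aseq lam i / lam i * vnorm (vsub (y i) (xtilde lam x y (i - 1))) ^ 2).
  set (aa := fun i => aseq lam (i - 1)).
  set (N := fun i => 2 * (Aseq lam i * (g (y i) - g xs)) + D i ^ 2).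
  assert (Hsig : 0 <= sigma < 1) by (unfold sigma; lra).
  assert (Hc0 : 0 < c) by (unfold c; nra).
  assert (HSum : forall n, (n <= K)%nat ->
    N n + c / 2 * ssum T n <= X ^ 2 + C1 * delta ^ 2 * ssum (fun i => aa i ^ 2) n
                               + 2 * delta * ssum (fun i => aa i * D i) n).
  { intro n. induction n as [|n IH]; intro Hn.
    - unfold N, D. cbn [ssum Aseq]. rewrite Hx0, vnorm_zero_sub. fold X. lra.
    - specialize (IH ltac:(lia)).
      destruct (Hstep n ltac:(lia)) as [He Hf].
      pose proof (one_step d g G xs sigma delta lam x y n Hc Hg Hsig Hd
                    (Hl (S n) ltac:(lia)) (Aseq_nonneg lam K Hl n ltac:(lia)) He Hf) as H1.
      cbv zeta in H1. fold c C1 in H1.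
      cbn [ssum].
      assert (ET : T (S n) = Aseq lam (S n) / lam (S n) * vnorm (vsub (y (S n)) (xtilde lam x y n)) ^ 2).
      { unfold T. replace (S n - 1)%nat with n by lia. reflexivity. }
      assert (EA : aa (S n) = aseq lam n) by (unfold aa; f_equal; lia).
      rewrite ET, EA. unfold N, D in *.
      nra. }
  assert (HAK : 0 < Aseq lam K) by (apply (Aseq_pos lam K Hl); lia).
  set (eta := 1 - alpha) in *.
  assert (Heta : 0 < eta <= 1) by (unfold eta; lra).
  assert (Hse : 0 < sqrt eta) by (apply sqrt_lt_R0; lra).
  assert (Hse2 : sqrt eta * sqrt eta = eta) by (apply sqrt_sqrt; lra).
  assert (Hse1 : sqrt eta <= 1) by nra.
  assert (HX : 0 <= X) by apply vnorm_nonneg.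
  set (q := Aseq lam K * delta).
  assert (Hq0 : 0 <= q) by (unfold q; nra).
  assert (Hq : 8 * q <= sqrt eta * X).
  { set (P := 8 / sqrt eta * Aseq lam K) in *.
    assert (Hpos : 0 < P) by (unfold P; apply Rmult_lt_0_compat; [apply Rdiv_lt_0_compat|]; lra).
    fold X in Hdelta. assert (H1 : delta * P <= X / P * P) by (apply Rmult_le_compat_r; lra).
    replace (X / P * P) with X in H1 by (field; lra).
    assert (E : delta * P * sqrt eta = 8 * q) by (unfold q, P; field; lra).
    assert (delta * P * sqrt eta <= X * sqrt eta) by (apply Rmult_le_compat_r; lra).
    lra. }
  assert (Hq8 : q <= X / 8).
  { assert (sqrt eta * X <= 1 * X) by (apply Rmult_le_compat_r; lra). lra. }
  assert (Hq2 : 64 * (q * q) <= eta * X ^ 2).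
  { assert ((8 * q) * (8 * q) <= (sqrt eta * X) * (sqrt eta * X)) by (apply Rmult_le_compat; lra).
    assert (E2 : sqrt eta * X * (sqrt eta * X) = eta * X ^ 2) by (set (se := sqrt eta) in *; rewrite <- Hse2; ring). lra. }
  assert (Hsig2 : sigma = 1 - eta / 2) by (unfold sigma, eta; lra).
  assert (Hcb : 3 * eta / 4 <= c) by (unfold c; rewrite Hsig2; nra).
  assert (HC1 : C1 * (q * q) <= 7 / 120 * X ^ 2).
  { unfold C1.
    assert (sigma ^ 2 <= 1) by nra.
    assert (2 * sigma ^ 2 / c * (q * q) <= X ^ 2 / 24).
    { apply (Rmult_le_reg_l c); [lra|].
      replace (c * (2 * sigma ^ 2 / c * (q * q))) with (2 * sigma ^ 2 * (q * q)) by (field; lra).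
      assert (2 * sigma ^ 2 * (q * q) <= 2 * (q * q)) by nra.
      assert (2 * (q * q) <= eta * X ^ 2 / 32) by nra.
      assert (3 * eta / 4 * (X ^ 2 / 24) <= c * (X ^ 2 / 24)) by nra.
      nra. }
    nra. }
  assert (HC1pos : 0 <= C1).
  { unfold C1. assert (0 <= 2 * sigma ^ 2 / c) by (apply Rmult_le_pos; [nra|apply Rlt_le, Rinv_0_lt_compat; lra]). lra. }
  assert (Haa : forall i, (i <= K)%nat -> 0 <= aa i).
  { intros i Hi. unfold aa. apply Rlt_le, (aseq_pos lam K Hl); lia. }
  assert (HT : forall m, (m <= K)%nat -> 0 <= ssum T m).
  { intros m Hm. apply ssum_nonneg. intros i Hi. unfold T.
    apply Rmult_le_pos; [|apply pow2_ge_0].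
    apply Rmult_le_pos; [apply (Aseq_nonneg lam K Hl); lia|].
    apply Rlt_le, Rinv_0_lt_compat, Hl; lia. }
  assert (HDm : forall m, (m <= K)%nat ->
     D m ^ 2 <= (X ^ 2 + C1 * (q * q)) + 2 * delta * ssum (fun i => aa i * D i) m).
  { intros m Hm. specialize (HSum m Hm). specialize (HT m Hm).
    assert (HN : D m ^ 2 <= N m).
    { unfold N. assert (0 <= Aseq lam m) by (apply (Aseq_nonneg lam K Hl); lia).
      specialize (Hmin (y m)). nra. }
    assert (H2 : ssum (fun i => aa i ^ 2) m <= Aseq lam K ^ 2).
    { unfold aa. pose proof (ssum_aa2 lam K Hl m Hm).
      pose proof (Aseq_mono lam K Hl m K ltac:(lia)).
      pose proof (Aseq_nonneg lam K Hl m Hm). nra. }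
    assert (C1 * delta ^ 2 * ssum (fun i => aa i ^ 2) m <= C1 * (q * q)).
    { unfold q. assert (0 <= C1 * delta ^ 2) by nra. nra. }
    nra. }
  assert (HB : forall i, (i <= K)%nat -> D i <= 6/5 * X).
  { intros i Hi. apply (dbound D aa K X (X ^ 2 + C1 * (q * q)) delta Haa) with (m := K); auto.
    - intro; apply vnorm_nonneg.
    - unfold aa. rewrite ssum_aa. unfold q in *. lra.
    - lra. }
  assert (HS : ssum (fun i => aa i * D i) K <= 6/5 * X * Aseq lam K).
  { rewrite <- ssum_aa. rewrite <- ssum_scal. apply ssum_le. intros i Hi.
    specialize (HB i ltac:(lia)). specialize (Haa i ltac:(lia)). fold (aa i). nra. }
  specialize (HSum K (le_n K)).
  assert (HNK : 0 <= N K).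
  { unfold N. assert (0 <= Aseq lam K) by lra. specialize (Hmin (y K)). nra. }
  assert (Hsumaa : C1 * delta ^ 2 * ssum (fun i => aa i ^ 2) K <= C1 * (q * q)).
  { unfold aa. pose proof (ssum_aa2 lam K Hl K (le_n K)).
    unfold q. assert (0 <= C1 * delta ^ 2) by nra. nra. }
  assert (Hfin : c / 2 * ssum T K <= (1 + 7/120) * X ^ 2 + 3 / 10 * X ^ 2).
  { assert (2 * delta * ssum (fun i => aa i * D i) K <= 3 / 10 * X ^ 2).
    { assert (2 * delta * ssum (fun i => aa i * D i) K <= 2 * delta * (6/5 * X * Aseq lam K)) by nra.
      unfold q in *. nra. }
    nra. }
  fold T. apply (Rmult_le_reg_l (c / 2 * eta)); [nra|].
  replace (c / 2 * eta * (4 * X ^ 2 / eta)) with (2 * c * X ^ 2) by (field; lra).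
  assert (HTK := HT K (le_n K)).
  assert (c / 2 * eta * ssum T K <= eta * ((1 + 7/120) * X ^ 2 + 3 / 10 * X ^ 2)) by nra.
  assert (c = eta * (1 - eta / 4)) by (unfold c; rewrite Hsig2; field).
  nra.
Qed.

Lemma inv2_anti u v : 0 < u -> u <= v -> 1 / (2 * v) <= 1 / (2 * u).
Proof.
  intros. unfold Rdiv. rewrite !Rmult_1_l. apply Rinv_le_contravar; lra.
Qed.

Lemma ssum_tele (h : nat -> R) n : ssum (fun i => h i - h (i - 1)%nat) n = h n - h 0%nat.
Proof.
  induction n as [|n IH]; simpl. ring. rewrite IH. replace (n - 0)%nat with n by lia. ring.
Qed.

Lemma sqrt_step A a l : 0 <= A -> 0 < l -> 0 < a -> a * a = l * (A + a) ->
  sqrt l / 2 <= sqrt (A + a) - sqrt A.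
Proof.
  intros HA Hl Ha E.
  set (p := sqrt (A + a)). set (q := sqrt A).
  assert (Hp2 : p * p = A + a) by (apply sqrt_sqrt; lra).
  assert (Hq2 : q * q = A) by (apply sqrt_sqrt; lra).
  assert (Hq : 0 <= q) by apply sqrt_pos.
  assert (Hp : 0 < p) by (apply sqrt_lt_R0; lra).
  assert (Hsl : sqrt l * p = a).
  { unfold p. rewrite <- sqrt_mult by lra. rewrite <- E. apply sqrt_square. lra. }
  assert (Hpq : q <= p) by nra.
  assert (Hs : 0 <= sqrt l) by apply sqrt_pos.
  assert ((p - q) * (2 * p) >= sqrt l * p) by nra.
  nra.
Qed.

Lemma ln_step A a : 0 < A -> 0 < a -> a / (A + a) <= ln (A + a) - ln A.
Proof.
  intros HA Ha.
  assert (H := exp_ineq1_le (ln (A / (A + a)))).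
  rewrite exp_ln in H by (apply Rdiv_lt_0_compat; lra).
  unfold Rdiv in H. rewrite ln_mult, ln_Rinv in H by (try apply Rinv_0_lt_compat; lra).
  assert (A / (A + a) = 1 - a / (A + a)) by (field; lra).
  lra.
Qed.

Lemma exp_4pow J : 4 ^ J <= exp (2 * INR J).
Proof.
  induction J as [|J IH]. simpl. rewrite Rmult_0_r, exp_0. lra.
  rewrite S_INR. replace (2 * (INR J + 1)) with (2 * INR J + (1 + 1)) by ring.
  rewrite exp_plus, exp_plus. simpl.
  assert (H1 := exp_ineq1_le 1).
  assert (0 <= 4 ^ J) by (apply pow_le; lra).
  assert (4 <= exp 1 * exp 1) by nra.
  assert (0 < exp (2 * INR J)) by apply exp_pos.
  assert (4 * 4 ^ J <= exp (2 * INR J) * 4) by nra.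
  assert (exp (2 * INR J) * 4 <= exp (2 * INR J) * (exp 1 * exp 1)) by (apply Rmult_le_compat_l; lra).
  lra.
Qed.

Lemma tangent p m : 0 < p -> 0 < m -> 12 / m - 256 / (m ^ 3 * p ^ 2) <= p.
Proof.
  intros Hp Hm. set (gm := m / 8).
  assert (Hg : 0 < gm) by (unfold gm; lra).
  assert (E1 : 12 / m = 3 / (2 * gm)) by (unfold gm; field; lra).
  assert (E2 : 256 / (m ^ 3 * p ^ 2) = 1 / (2 * gm ^ 3 * p ^ 2)) by (unfold gm; field; lra).
  rewrite E1, E2.
  assert (0 <= (gm * p - 1) ^ 2 * (2 * gm * p + 1)) by (apply Rmult_le_pos; [apply pow2_ge_0|nra]).
  assert (Hd : 0 < 2 * gm ^ 3 * p ^ 2) by (apply Rmult_lt_0_compat; [apply Rmult_lt_0_compat; [lra|apply pow_lt; lra]|apply pow_lt; lra]).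
  apply (Rmult_le_reg_l (2 * gm ^ 3 * p ^ 2)); [exact Hd|].
  replace (2 * gm ^ 3 * p ^ 2 * (3 / (2 * gm) - 1 / (2 * gm ^ 3 * p ^ 2)))
    with (3 * gm ^ 2 * p ^ 2 - 1) by (field; lra).
  nra.
Qed.

Fixpoint nsum (f : nat -> nat) (n : nat) : nat :=
  match n with O => O | S m => (nsum f m + f (S m))%nat end.

Lemma nsum_INR f n : INR (nsum f n) = ssum (fun i => INR (f i)) n.
Proof. induction n; simpl. reflexivity. rewrite plus_INR, IHn. reflexivity. Qed.

Lemma ssum_comb (f h : nat -> R) a b c n :
  ssum (fun i => a * f i - b * (c * h i)) n = a * ssum f n - b * (c * ssum h n).
Proof. induction n; simpl; [ring|rewrite IHn; ring]. Qed.

Theorem mainTheorem15 (d : nat) (alpha : R) (omega : R -> R)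
  (g : vec d -> R) (G : vec d -> vec d) (xs : vec d)
  (delta : R) (K : nat) (lam : nat -> R) (x y : nat -> vec d) :
  0 <= alpha < 1 ->
  (forall t, 0 <= t -> 0 < omega t) ->
  (forall s t, 0 <= s <= t -> omega s <= omega t) ->
  convex_fun g -> has_gradient g G -> is_minimizer g xs ->
  (1 <= K)%nat -> 0 <= delta ->
  accel_framework g G ((1 + alpha) / 2) delta K lam x y ->
  delta <= vnorm xs / ((8 / sqrt (1 - alpha)) * Aseq lam K) ->
  (forall k, (1 <= k <= K)%nat ->
     lam k >= 1 / (2 * omega (vnorm (vsub (y k) (xtilde lam x y (k - 1)%nat))))) ->
  (forall k J : nat, (1 <= k <= K)%nat -> (0 < J)%nat -> INR J < INR k / 2 ->
     Aseq lam k >=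
       Rmin (4 ^ J / (2 * omega ((8 / sqrt (1 - alpha)) * vnorm xs / 4)))
            ((INR k / INR J) ^ 2 /
               (16 * 2 * omega (4 * (8 / sqrt (1 - alpha)) * vnorm xs
                                  / Rpower (INR k / INR J) (3 / 2))))) /\
  (forall Rb : R, vnorm xs <= Rb ->
     forall k, (1 <= k <= K)%nat ->
       Aseq lam k >= 1 / (2 * omega (2 * (8 / sqrt (1 - alpha)) * Rb))).
Proof.
  intros Ha Hom Hmono Hc Hg Hmin HK Hd Hfw Hdelta Hlam.
  pose proof (main_sum d alpha g G xs delta K lam x y Ha Hc Hg Hmin HK Hd Hfw Hdelta) as HS.
  destruct Hfw as [Hl _].
  set (eta := 1 - alpha) in *.
  set (mu := 8 / sqrt eta) in *.
  set (X := vnorm xs) in *.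
  set (r := fun i => vnorm (vsub (y i) (xtilde lam x y (i - 1)))).
  set (T := fun i => Aseq lam i / lam i * r i ^ 2).
  change (ssum T K <= 4 * X ^ 2 / eta) in HS.
  assert (Heta : 0 < eta <= 1) by (unfold eta; lra).
  assert (Hse : 0 < sqrt eta) by (apply sqrt_lt_R0; lra).
  assert (Hse2 : sqrt eta * sqrt eta = eta) by (apply sqrt_sqrt; lra).
  assert (Hmu : 0 < mu) by (unfold mu; apply Rdiv_lt_0_compat; lra).
  assert (Hmu2 : mu * mu = 64 / eta).
  { unfold mu. replace (64 / eta) with (64 / (sqrt eta * sqrt eta)) by (rewrite Hse2; reflexivity). field. lra. }
  assert (HX : 0 <= X) by apply vnorm_nonneg.
  assert (HS2 : ssum T K <= mu * mu * X ^ 2 / 16).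
  { rewrite Hmu2. replace (64 / eta * X ^ 2 / 16) with (4 * X ^ 2 / eta) by (field; lra). exact HS. }
  assert (Hr : forall i, 0 <= r i) by (intro; apply vnorm_nonneg).
  assert (HTnn : forall i, (1 <= i <= K)%nat -> 0 <= T i).
  { intros i Hi. unfold T. apply Rmult_le_pos; [|apply pow2_ge_0].
    apply Rmult_le_pos; [apply (Aseq_nonneg lam K Hl); lia|].
    apply Rlt_le, Rinv_0_lt_compat, Hl; lia. }
  assert (HTsum : forall k, (k <= K)%nat -> ssum T k <= ssum T K).
  { intros k Hk. apply ssum_mono'; auto. }
  assert (HTi : forall i, (1 <= i <= K)%nat -> T i <= ssum T K).
  { intros i Hi. destruct i as [|i]. lia.
    pose proof (HTsum (S i) ltac:(lia)). simpl in H.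
    pose proof (ssum_nonneg T i (fun j Hj => HTnn j ltac:(lia))). lra. }
  assert (HA1 : Aseq lam 1%nat = lam 1%nat).
  { simpl. unfold a_next. rewrite Rmult_0_r, Rplus_0_r, sqrt_pow2.
    field. apply Rlt_le, Hl; lia. }
  assert (Hr1 : r 1%nat <= mu * X / 4).
  { assert (HT1 : T 1%nat = r 1%nat ^ 2).
    { unfold T. rewrite HA1. field. apply Rgt_not_eq, Hl; lia. }
    pose proof (HTi 1%nat ltac:(lia)). specialize (Hr 1%nat).
    destruct (Rle_dec (r 1%nat) (mu * X / 4)) as [ok|nok]; [exact ok|exfalso].
    assert (0 <= mu * X) by nra. nra. }
  assert (Hlam1 : lam 1%nat >= 1 / (2 * omega (r 1%nat))) by (apply Hlam; lia).
  assert (HA1b : forall z, mu * X / 4 <= z -> 1 / (2 * omega z) <= Aseq lam 1%nat).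
  { intros z Hz. rewrite HA1.
    assert (omega (r 1%nat) <= omega z) by (apply Hmono; split; [apply Hr|lra]).
    pose proof (inv2_anti (omega (r 1%nat)) (omega z) (Hom _ (Hr 1%nat)) H). lra. }
  assert (Hmon : forall k, (1 <= k <= K)%nat -> Aseq lam 1%nat <= Aseq lam k).
  { intros k Hk. apply (Aseq_mono lam K Hl); lia. }
  split.
  2:{ intros Rb HRb k Hk. apply Rle_ge.
      apply Rle_trans with (Aseq lam 1%nat); [|apply Hmon; auto].
      apply HA1b. nra. }
  intros k J Hk HJ HJk.
  assert (HJr : 0 < INR J) by (apply lt_0_INR; lia).
  assert (Hkr : INR k = INR J * (INR k / INR J)) by (field; lra).
  set (m := INR k / INR J) in *.
  assert (Hm2 : 2 < m).
  { apply (Rmult_lt_reg_l (INR J)); [lra|]. rewrite <- Hkr. lra. }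
  set (s := 4 * mu * X / Rpower m (3 / 2)).
  assert (HRp : 0 < Rpower m (3 / 2)) by (unfold Rpower; apply exp_pos).
  assert (HRp2 : Rpower m (3 / 2) * Rpower m (3 / 2) = m ^ 3).
  { rewrite <- Rpower_plus. replace (3 / 2 + 3 / 2) with (INR 3) by (simpl; lra).
    apply Rpower_pow. lra. }
  assert (Hs0 : 0 <= s) by (unfold s; apply Rmult_le_pos; [nra|apply Rlt_le, Rinv_0_lt_compat; lra]).
  assert (Hs2 : s * s = 16 * (mu * mu) * X ^ 2 / m ^ 3).
  { unfold s. rewrite <- HRp2. field. lra. }
  set (L2 := 1 / (2 * omega s)).
  assert (HL2 : 0 < L2) by (unfold L2; apply Rdiv_lt_0_compat; [lra|]; specialize (Hom s Hs0); lra).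
  set (gn := fun i => if (2 <=? i)%nat then (if Rle_dec (r i) s then 1%nat else 0%nat) else 0%nat).
  set (bn := fun i => if (2 <=? i)%nat then (if Rle_dec (r i) s then 0%nat else 1%nat) else 0%nat).
  assert (HGB : forall n, (nsum gn n + nsum bn n)%nat = (n - 1)%nat).
  { induction n as [|n IH]. reflexivity.
    cbn [nsum]. unfold gn at 2, bn at 2.
    destruct n as [|n].
    - simpl. reflexivity.
    - replace (2 <=? S (S n))%nat with true by (symmetry; apply Nat.leb_le; lia).
      destruct (Rle_dec (r (S (S n))) s); lia. }
  set (Gn := nsum gn k). set (Bn := nsum bn k).
  assert (HGBk : (Gn + Bn)%nat = (k - 1)%nat) by apply HGB.
  assert (P1 : forall i, (1 <= i <= k)%nat ->
     sqrt L2 / 2 * INR (gn i) <= sqrt (Aseq lam i) - sqrt (Aseq lam (i - 1))).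
  { intros i Hi. destruct i as [|i]. lia.
    replace (S i - 1)%nat with i by lia.
    change (Aseq lam (S i)) with (Aseq lam i + aseq lam i).
    assert (HAi : 0 <= Aseq lam i) by (apply (Aseq_nonneg lam K Hl); lia).
    assert (Hai : 0 < aseq lam i) by (apply (aseq_pos lam K Hl); lia).
    unfold gn. destruct (2 <=? S i)%nat; [destruct (Rle_dec (r (S i)) s) as [Hrs|Hrs]|].
    - simpl INR. rewrite Rmult_1_r.
      assert (Hli : L2 <= lam (S i)).
      { assert (H1 := Hlam (S i) ltac:(lia)). fold (r (S i)) in H1.
        assert (omega (r (S i)) <= omega s) by (apply Hmono; split; auto).
        pose proof (inv2_anti _ _ (Hom _ (Hr (S i))) H). unfold L2. lra. }
      pose proof (sqrt_step (Aseq lam i) (aseq lam i) (lam (S i)) HAi (Hl (S i) ltac:(lia)) Hai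
                   (a_next_sq _ _ (Hl (S i) ltac:(lia)) HAi)).
      pose proof (sqrt_le_1_alt _ _ Hli). lra.
    - simpl INR. rewrite Rmult_0_r. assert (sqrt (Aseq lam i) <= sqrt (Aseq lam i + aseq lam i)) by (apply sqrt_le_1_alt; lra). lra.
    - simpl INR. rewrite Rmult_0_r. assert (sqrt (Aseq lam i) <= sqrt (Aseq lam i + aseq lam i)) by (apply sqrt_le_1_alt; lra). lra. }
  assert (HP1 : sqrt L2 / 2 * INR Gn <= sqrt (Aseq lam k)).
  { unfold Gn. rewrite nsum_INR, <- ssum_scal.
    assert (H := ssum_le _ _ k P1). rewrite (ssum_tele (fun i => sqrt (Aseq lam i))) in H.
    simpl Aseq in H. rewrite sqrt_0 in H. lra. }
  set (cc := / (mu * mu * X ^ 2)).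
  assert (Hcc : 0 <= cc).
  { unfold cc. destruct (Req_dec X 0) as [E|E].
    - rewrite E. replace (mu * mu * 0 ^ 2) with 0 by ring. rewrite Rinv_0. lra.
    - apply Rlt_le, Rinv_0_lt_compat. assert (0 < X) by lra. apply Rmult_lt_0_compat; [nra|apply pow_lt; lra]. }
  set (Lf := fun i => ln (Aseq lam (Nat.max i 1))).
  assert (P2 : forall i, (1 <= i <= k)%nat ->
     12 / m * INR (bn i) - 16 * (cc * T i) <= Lf i - Lf (i - 1)%nat).
  { intros i Hi. destruct i as [|i]. lia.
    assert (HTS := HTnn (S i) ltac:(lia)).
    destruct i as [|i].
    { unfold bn, Lf. simpl. nra. }
    replace (S (S i) - 1)%nat with (S i) by lia.
    unfold Lf. replace (Nat.max (S (S i)) 1) with (S (S i)) by lia.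
    replace (Nat.max (S i) 1) with (S i) by lia.
    change (Aseq lam (S (S i))) with (Aseq lam (S i) + aseq lam (S i)).
    assert (HAi : 0 < Aseq lam (S i)) by (apply (Aseq_pos lam K Hl); lia).
    assert (Hai : 0 < aseq lam (S i)) by (apply (aseq_pos lam K Hl); lia).
    pose proof (ln_step _ _ HAi Hai) as Hln.
    set (A := Aseq lam (S i)) in *. set (a := aseq lam (S i)) in *.
    set (p := a / (A + a)) in *.
    assert (Hp : 0 < p) by (unfold p; apply Rdiv_lt_0_compat; lra).
    unfold bn. replace (2 <=? S (S i))%nat with true by (symmetry; apply Nat.leb_le; lia).
    destruct (Rle_dec (r (S (S i))) s) as [Hrs|Hrs].
    { simpl INR. assert (0 <= cc * T (S (S i))) by (apply Rmult_le_pos; auto). lra. }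
    simpl INR. rewrite Rmult_1_r.
    set (l := lam (S (S i))) in *.
    assert (Hl2 : 0 < l) by (apply Hl; lia).
    assert (Ha2 : a * a = l * (A + a)) by (apply a_next_sq; lra).
    assert (Hrs' : s < r (S (S i))) by lra.
    assert (HT : T (S (S i)) = (A + a) / l * r (S (S i)) ^ 2) by reflexivity.
    destruct (Req_dec X 0) as [HX0|HX0].
    { exfalso. pose proof (HTi (S (S i)) ltac:(lia)). rewrite HX0 in HS2.
      assert (0 < (A + a) / l) by (apply Rdiv_lt_0_compat; lra).
      assert (0 < r (S (S i)) ^ 2) by (apply pow_lt; lra).
      assert (0 < T (S (S i))) by (rewrite HT; apply Rmult_lt_0_compat; auto).
      nra. }
    assert (HXp : 0 < X) by lra.
    pose proof (tangent p m Hp ltac:(lra)) as Htan.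
    assert (Hip : 1 / p ^ 2 = (A + a) / l).
    { replace (1 / p ^ 2) with ((A + a) * (A + a) / (a * a)) by (unfold p; field; lra). rewrite Ha2. field. lra. }
    assert (E1 : 256 / (m ^ 3 * p ^ 2) = 256 / m ^ 3 * ((A + a) / l)).
    { replace (256 / (m ^ 3 * p ^ 2)) with (256 / m ^ 3 * (1 / p ^ 2)) by (field; lra).
      rewrite Hip. reflexivity. }
    assert (Hm3 : 0 < m ^ 3) by (apply pow_lt; lra).
    assert (Hr2 : s * s <= r (S (S i)) ^ 2) by nra.
    assert (E2 : 16 * (cc * T (S (S i))) >= 256 / m ^ 3 * ((A + a) / l)).
    { rewrite HT. unfold cc.
      assert (HAl : 0 < (A + a) / l) by (apply Rdiv_lt_0_compat; lra).
      assert ((A + a) / l * (s * s) <= (A + a) / l * r (S (S i)) ^ 2) by (apply Rmult_le_compat_l; lra).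
      rewrite Hs2 in H.
      assert (Hmx : 0 < mu * mu * X ^ 2) by (apply Rmult_lt_0_compat; nra).
      apply Rle_ge.
      apply (Rmult_le_reg_l (mu * mu * X ^ 2)); [exact Hmx|].
      replace (mu * mu * X ^ 2 * (16 * (/ (mu * mu * X ^ 2) * ((A + a) / l * r (S (S i)) ^ 2))))
        with (16 * ((A + a) / l * r (S (S i)) ^ 2)) by (field; lra).
      replace (mu * mu * X ^ 2 * (256 / m ^ 3 * ((A + a) / l)))
        with (16 * ((A + a) / l * (16 * (mu * mu) * X ^ 2 / m ^ 3))) by (field; lra).
      lra. }
    lra. }
  assert (HP2 : 12 / m * INR Bn - 16 * (cc * ssum T k) <= ln (Aseq lam k) - ln (Aseq lam 1%nat)).
  { assert (H := ssum_le _ _ k P2). rewrite (ssum_tele Lf) in H.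
    unfold Lf in H. replace (Nat.max k 1) with k in H by lia. simpl Nat.max in H.
    rewrite ssum_comb, <- nsum_INR in H. fold Bn in H. lra. }
  assert (Hcs : cc * ssum T k <= 1 / 16).
  { assert (H1 : ssum T k <= mu * mu * X ^ 2 / 16) by (pose proof (HTsum k ltac:(lia)); lra).
    unfold cc. destruct (Req_dec X 0) as [E|E].
    - rewrite E. replace (mu * mu * 0 ^ 2) with 0 by ring. rewrite Rinv_0. lra.
    - assert (Hmx : 0 < mu * mu * X ^ 2) by (apply Rmult_lt_0_compat; [nra|apply pow_lt; lra]).
      apply Rmult_le_compat_l with (r := / (mu * mu * X ^ 2)) in H1; [|apply Rlt_le, Rinv_0_lt_compat; lra].
      replace (/ (mu * mu * X ^ 2) * (mu * mu * X ^ 2 / 16)) with (1 / 16) in H1 by (field; lra).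
      exact H1. }
  assert (HAk : 0 < Aseq lam k) by (apply (Aseq_pos lam K Hl); lia).
  assert (HA1p : 0 < Aseq lam 1%nat) by (apply (Aseq_pos lam K Hl); lia).
  apply Rle_ge.
  destruct (Rle_dec (m / 2) (INR Gn)) as [HG|HG].
  - apply Rle_trans with ((INR k / INR J) ^ 2 / (16 * 2 * omega s)); [apply Rmin_r|].
    fold m.
    assert (Hsq : sqrt L2 * m / 4 <= sqrt (Aseq lam k)).
    { assert (0 <= sqrt L2) by apply sqrt_pos. nra. }
    assert (H0 : 0 <= sqrt L2 * m / 4) by (assert (0 <= sqrt L2) by apply sqrt_pos; nra).
    assert (Hsq2 : (sqrt L2 * m / 4) * (sqrt L2 * m / 4) <= sqrt (Aseq lam k) * sqrt (Aseq lam k))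
      by (apply Rmult_le_compat; lra).
    rewrite sqrt_sqrt in Hsq2 by lra.
    replace ((sqrt L2 * m / 4) * (sqrt L2 * m / 4)) with ((sqrt L2 * sqrt L2) * m * m / 16) in Hsq2 by field.
    rewrite sqrt_sqrt in Hsq2 by lra.
    unfold L2 in Hsq2.
    assert (Hw : 0 < omega s) by (apply Hom; lra).
    replace (m ^ 2 / (16 * 2 * omega s)) with (1 / (2 * omega s) * m * m / 16) by (field; lra).
    lra.
  - apply Rle_trans with (4 ^ J / (2 * omega (mu * X / 4))); [apply Rmin_l|].
    assert (HGn : (2 * J * Gn < k)%nat).
    { apply INR_lt. rewrite !mult_INR. simpl INR at 1.
      assert (INR Gn < m / 2) by lra. rewrite Hkr. nra. }
    assert (H2J : (2 * J < k)%nat).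
    { apply INR_lt. rewrite mult_INR. simpl INR at 1. lra. }
    assert (HBn : (k <= 3 * Bn)%nat).
    { assert (2 * Gn <= 2 * J * Gn)%nat by nia. lia. }
    apply le_INR in HBn. rewrite mult_INR in HBn. replace (INR 3) with 3 in HBn by (simpl; lra).
    assert (Hm0 : 0 < m) by lra.
    assert (H12 : 12 / m * INR Bn >= 4 * INR J).
    { apply Rle_ge. apply (Rmult_le_reg_l m); [lra|].
      replace (m * (12 / m * INR Bn)) with (12 * INR Bn) by (field; lra).
      assert (m * (4 * INR J) = 4 * INR k) by (rewrite Hkr; ring). lra. }
    assert (Hln : ln (Aseq lam 1%nat) + 2 * INR J <= ln (Aseq lam k)) by (assert (1 <= INR J) by (replace 1 with (INR 1) by reflexivity; apply le_INR; lia); lra).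
    assert (Hln2 : exp (ln (Aseq lam 1%nat) + 2 * INR J) <= exp (ln (Aseq lam k))) by (destruct Hln as [Hlt|Heq]; [apply Rlt_le, exp_increasing; auto|rewrite Heq; lra]). clear Hln. rename Hln2 into Hln. rewrite exp_ln in Hln by lra. rewrite exp_plus, exp_ln in Hln by lra.
    pose proof (exp_4pow J) as H4.
    assert (H1 := HA1b (mu * X / 4) (Rle_refl _)).
    assert (Hw : 0 < omega (mu * X / 4)) by (apply Hom; nra).
    assert (H4p : 0 <= 4 ^ J) by (apply pow_le; lra).
    replace (4 ^ J / (2 * omega (mu * X / 4))) with (4 ^ J * (1 / (2 * omega (mu * X / 4)))) by (field; lra).
    assert (0 <= 1 / (2 * omega (mu * X / 4))) by (apply Rlt_le, Rdiv_lt_0_compat; lra).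
    assert (4 ^ J * (1 / (2 * omega (mu * X / 4))) <= exp (2 * INR J) * Aseq lam 1%nat)
      by (apply Rmult_le_compat; lra).
    lra.
Qed.
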